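(* Let $L_a,L_b,L_c$ be Lagrangians in $\mathbf R^{2n}$ and let $(\mathbf e_a,\mathbf f_a)$, $(\mathbf e_b,\mathbf f_b)$, $(\mathbf e_c,\mathbf f_c)$ be symplectic bases such that $L_a=\mathrm{Span}(\mathbf e_c)=\mathrm{Span}(\mathbf f_b)=\mathrm{Span}(\mathbf e_a+\mathbf f_a)$, $L_b=\mathrm{Span}(\mathbf e_a)=\mathrm{Span}(\mathbf f_c)=\mathrm{Span}(\mathbf e_b+\mathbf f_b)$, $L_c=\mathrm{Span}(\mathbf e_b)=\mathrm{Span}(\mathbf f_a)=\mathrm{Span}(\mathbf e_c+\mathbf f_c)$. Let $A,B,C\in\mathrm{GL}(n,\mathbf R)$ be the matrices uniquely defined by $\mathbf f_b=-\mathbf e_c\cdot A$, $\mathbf f_c=-\mathbf e_a\cdot B$, $\mathbf f_a=-\mathbf e_b\cdot C$. Then $A,B,C$ are orthogonal and $CBA=-\mathrm{Id}$. Furthermore $\mathbf e_b=(\mathbf e_c+\mathbf f_c)\cdot A$, $\mathbf e_c=(\mathbf e_a+\mathbf f_a)\cdot B$, and $\mathbf e_a=(\mathbf e_b+\mathbf f_b)\cdot C$.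
   Context: $\mathbf R^{2n}$ carries the standard symplectic form $\omega(x,y)={}^T x\begin{pmatrix}0&\mathrm{Id}\\-\mathrm{Id}&0\end{pmatrix}y$; a Lagrangian is an $n$-dimensional subspace on which $\omega$ vanishes. A symplectic basis is a pair $(\mathbf e,\mathbf f)$ of $n$-tuples of vectors forming a basis with $\omega(e_i,e_j)=\omega(f_i,f_j)=0$ and $\omega(e_i,f_j)=\delta_{ij}$. For an $n$-tuple $\mathbf v=(v_1,\dots,v_n)$ and an $n\times n$ matrix $g$, $\mathbf v\cdot g$ is the $n$-tuple whose $j$-th entry is $\sum_i v_i g_{ij}$; $\mathbf v+\mathbf w$ is the termwise sum; $\mathrm{Span}(\mathbf v)$ is the span of its entries. *)

(* Defs.v *)
(* Vectors of R^{2n} are row vectors 'rV[R]_(n + n);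
   an n-tuple of vectors (v_1,...,v_n) is the n x 2n matrix whose i-th row is v_i. *)
From HB Require Import structures.
From mathcomp Require Import all_boot all_order all_algebra.
From mathcomp Require Import reals.
Set Implicit Arguments. Unset Strict Implicit. Unset Printing Implicit Defensive.
Import Order.TTheory GRing.Theory Num.Theory.
Local Open Scope ring_scope.

Section Symp.
Variable R : realType.
Variable n : nat.

Definition Jmx : 'M[R]_(n + n) := block_mx 0 1%:M (- 1%:M) 0.

Definition omega (x y : 'rV[R]_(n + n)) : R := (x *m Jmx *m y^T) 0 0.

Definition tmul (V : 'M[R]_(n, n + n)) (g : 'M[R]_n) : 'M[R]_(n, n + n) :=
  \matrix_(j < n) (\sum_(i < n) g i j *: row i V).

(* L (given by a matrix whose row space is the subspace) is Lagrangian *)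
Definition lagrangian (L : 'M[R]_(n + n)) : Prop :=
  \rank L = n /\
  forall x y : 'rV[R]_(n + n), (x <= L)%MS -> (y <= L)%MS -> omega x y = 0.

Definition symplectic_basis (E F : 'M[R]_(n, n + n)) : Prop :=
  col_mx E F \in unitmx /\
  (forall i j, omega (row i E) (row j E) = 0) /\
  (forall i j, omega (row i F) (row j F) = 0) /\
  (forall i j, omega (row i E) (row j F) = (i == j)%:R).

Definition orthogonal_mx (A : 'M[R]_n) : Prop := A *m A^T = 1%:M.

End Symp.

(* Main.v *)
Require Import Defs.
From HB Require Import structures.
From mathcomp Require Import all_boot all_order all_algebra.
From mathcomp Require Import reals.
Import Order.TTheory GRing.Theory Num.Theory.
Set Implicit Arguments. Unset Strict Implicit.
Local Open Scope ring_scope.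

Section H.
Variable R : realType.
Variable n : nat.
Local Notation M2 := 'M[R]_(n, n + n).
Definition G (X Y : M2) : 'M[R]_n := X *m Jmx R n *m Y^T.

Lemma GE X Y i j : G X Y i j = omega (row i X) (row j Y).
Proof.
rewrite /G /omega tr_row -row_mul !mxE.
by apply: eq_bigr => k _; rewrite !mxE.
Qed.

Lemma tmulE (V : M2) g : tmul V g = g^T *m V.
Proof.
apply/matrixP=> j k; rewrite !mxE summxE.
by apply: eq_bigr => i _; rewrite !mxE.
Qed.

Lemma GmulL P X Y : G (P *m X) Y = P *m G X Y.
Proof. by rewrite /G !mulmxA. Qed.
Lemma GmulR Q X Y : G X (Q *m Y) = G X Y *m Q^T.
Proof. by rewrite /G trmx_mul !mulmxA. Qed.
Lemma GaddL X X' Y : G (X + X') Y = G X Y + G X' Y.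
Proof. by rewrite /G !mulmxDl. Qed.
Lemma GaddR X Y Y' : G X (Y + Y') = G X Y + G X Y'.
Proof. by rewrite /G linearD /= mulmxDr. Qed.
Lemma GoppL X Y : G (- X) Y = - G X Y.
Proof. by rewrite /G !mulNmx. Qed.
Lemma GoppR X Y : G X (- Y) = - G X Y.
Proof. by rewrite /G linearN /= mulmxN. Qed.
Lemma Jtr : (Jmx R n)^T = - Jmx R n.
Proof.
rewrite /Jmx tr_block_mx !trmx0 trmx1 linearN /= trmx1 opp_block_mx.
by rewrite !oppr0 opprK.
Qed.
Lemma Gswap X Y : G Y X = - (G X Y)^T.
Proof. by rewrite /G !trmx_mul trmxK Jtr mulNmx mulmxN mulmxA opprK. Qed.

Lemma sb_G E F : symplectic_basis E F ->
  [/\ G E E = 0, G F F = 0 & G E F = 1%:M].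
Proof.
case=> _ [h1 [h2 h3]]; split; apply/matrixP=> i j; rewrite GE ?h1 ?h2 ?h3 !mxE //.
Qed.
End H.
Arguments G {R n}.

Lemma key (R : realType) (n : nat) (ea fa eb fb ec fc : 'M[R]_(n, n + n))
  (A B C : 'M[R]_n) :
  G ec ec = 0 -> G fc fc = 0 -> G ec fc = 1%:M -> G ea fa = 1%:M ->
  G eb fb = 1%:M ->
  fb = - (A^T *m ec) -> fc = - (B^T *m ea) -> fa = - (C^T *m eb) ->
  (eb <= (ec + fc)%R)%MS -> ((ea + fa)%R <= ec)%MS -> (ea <= fc)%MS ->
  [/\ B *m B^T = 1%:M, C^T = - (B *m A) &
      exists M, eb = M *m (ec + fc) /\ M *m A = 1%:M].
Proof.
move=> Gcc Gff Gcf Gaa Gbb hfb hfc hfa /submxP [M hM] /submxP [P hP] /submxP [N hN].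
have Gfc : G fc ec = - 1%:M by rewrite Gswap Gcf trmx1.
have BtN : B^T *m N = - 1%:M.
  have := congr1 (fun Z => G Z ec) hfc; rewrite /= hN GoppL !GmulL Gfc.
  by rewrite mulmxN mulmx1 mulmxN opprK => /esym.
have MA : M *m A = 1%:M.
  by rewrite -Gbb hM hfb GoppR GmulR GmulL GaddL Gcc Gfc add0r trmxK mulmxN mulNmx mulmx1 opprK.
have CtM : C^T *m M = N.
  have := congr1 (fun Z => G Z ec) hP; rewrite /= GmulL Gcc mulmx0 => h.
  rewrite GaddL in h. rewrite hN hfa hM in h.
  move: h; rewrite GoppL !GmulL GaddL Gcc Gfc add0r !mulmxN mulmx1 opprK.
  by rewrite mulmx1 => /eqP; rewrite addrC subr_eq0 => /eqP.
have NNt : N *m N^T = 1%:M.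
  move: Gaa; rewrite hN hfa hM GmulL GoppR GmulR GmulR GaddR Gff addr0 Gfc.
  by rewrite !mulNmx mul1mx opprK -trmx_mul CtM.
have NtN := mulmx1C NNt.
have Bt : B^T = - N^T.
  by rewrite -[B^T]mulmx1 -NNt mulmxA BtN mulNmx mul1mx.
have Bn : B = - N by rewrite -[B]trmxK Bt linearN /= trmxK.
split.
- by rewrite Bn linearN /= mulNmx mulmxN opprK NNt.
- by rewrite -[C^T]mulmx1 -MA mulmxA CtM Bn mulNmx opprK.
- by exists M.
Qed.

Unset Implicit Arguments.
Lemma inv_tr (R : realType) (n : nat) (M A : 'M[R]_n) :
  M *m A = 1%:M -> A *m A^T = 1%:M -> M = A^T.
Proof. by move=> h1 h2; rewrite -[M]mulmx1 -h2 mulmxA h1 mul1mx. Qed.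

Arguments inv_tr {R n M A}.
Arguments key {R n ea fa eb fb ec fc A B C}.
Theorem lemma3p8 (R : realType) (n : nat)
  (La Lb Lc : 'M[R]_(n + n))
  (ea fa eb fb ec fc : 'M[R]_(n, n + n))
  (A B C : 'M[R]_n) :
  lagrangian La -> lagrangian Lb -> lagrangian Lc ->
  symplectic_basis ea fa -> symplectic_basis eb fb -> symplectic_basis ec fc ->
  (La == ec)%MS -> (La == fb)%MS -> (La == (ea + fa)%R)%MS ->
  (Lb == ea)%MS -> (Lb == fc)%MS -> (Lb == (eb + fb)%R)%MS ->
  (Lc == eb)%MS -> (Lc == fa)%MS -> (Lc == (ec + fc)%R)%MS ->
  A \in unitmx -> B \in unitmx -> C \in unitmx ->
  fb = - tmul ec A -> fc = - tmul ea B -> fa = - tmul eb C ->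
  [/\ orthogonal_mx A, orthogonal_mx B & orthogonal_mx C] /\
  C *m B *m A = - 1%:M /\
  [/\ eb = tmul (ec + fc) A,
      ec = tmul (ea + fa) B &
      ea = tmul (eb + fb) C].
Proof.

move=> _ _ _ /sb_G [Gaa Gff_a Gaf] /sb_G [Gbb Gff_b Gbf] /sb_G [Gcc Gff_c Gcf].
move=> /andP [La1 La2] /andP [La3 La4] /andP [La5 La6].
move=> /andP [Lb1 Lb2] /andP [Lb3 Lb4] /andP [Lb5 Lb6].
move=> /andP [Lc1 Lc2] /andP [Lc3 Lc4] /andP [Lc5 Lc6] _ _ _.
rewrite !tmulE => hfb hfc hfa.
have [oB hC [M1 [hM1 M1A]]] := key Gcc Gff_c Gcf Gaf Gbf hfb hfc hfa
  (submx_trans Lc2 Lc5) (submx_trans La6 La1) (submx_trans Lb2 Lb3).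
have [oC hA [M2 [hM2 M2B]]] := key Gaa Gff_a Gaf Gbf Gcf hfc hfa hfb
  (submx_trans La2 La5) (submx_trans Lb6 Lb1) (submx_trans Lc2 Lc3).
have [oA hB [M3 [hM3 M3C]]] := key Gbb Gff_b Gbf Gcf Gaf hfa hfb hfc
  (submx_trans Lb2 Lb5) (submx_trans Lc6 Lc1) (submx_trans La2 La3).
split; first by [].
split.
  by move: oC; rewrite hC mulmxN mulmxA => /eqP; rewrite eqr_oppLR => /eqP.
split.
- by rewrite hM1 (inv_tr M1A oA).
- by rewrite hM2 (inv_tr M2B oB).
- by rewrite hM3 (inv_tr M3C oC).
Qed.
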